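(* Let $\mathcal{M}=(S,P,E,s_{init},L)$ be a CTMC with absorbing goal state $g$, let $\varepsilon,\delta\geq0$, $q=\max_{p\in S}E(p)$, $t\geq0$, and $s,s'\in S$ with $s\sim_{\varepsilon,\delta}s'$. (1) If $\delta=0$ then $|\mathrm{Pr}_s(\lozenge^{\leq t}g)-\mathrm{Pr}_{s'}(\lozenge^{\leq t}g)|\leq1-e^{-qt\varepsilon}$. (2) If $\varepsilon=0$ then $|\mathrm{Pr}_s(\lozenge^{\leq t}g)-\mathrm{Pr}_{s'}(\lozenge^{\leq t}g)|\leq1-e^{-qt(e^{\delta}-1)}$. (3) If $\varepsilon=\delta=0$ then $\mathrm{Pr}_s(\lozenge^{\leq t}g)=\mathrm{Pr}_{s'}(\lozenge^{\leq t}g)$.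
   Context: A CTMC $(S,P,E,s_{init},L)$: finite $S$, $P\colon S\to\mathrm{Distr}(S)$ ($P(s,A)=\sum_{a\in A}P(s,a)$), $E\colon S\to\mathbb{R}_{>0}$, initial state, labeling $L$; residence time in $s$ is exponential with rate $E(s)$, then a jump to $s'$ with probability $P(s,s')$. $\mathrm{Pr}_s(\lozenge^{\leq t}g)$: probability of reaching $g$ from $s$ within time $t$. For $R\subseteq S\times S$, $R(A)=\{t'\mid\exists a\in A:(a,t')\in R\}$. A reflexive symmetric $R$ is an $(\varepsilon,\delta)$-bisimulation if for all $(s,s')\in R$: $L(s)=L(s')$, $|\ln E(s)-\ln E(s')|\leq\delta$, and $P(s,A)\leq P(s',R(A))+\varepsilon$ for all $A\subseteq S$; $s\sim_{\varepsilon,\delta}s'$ if some such relation contains $(s,s')$. Standing assumption: $g$ is the unique goal state, absorbing and uniquely labeled, and all states from which $g$ is unreachable are collapsed into one absorbing uniquely labeled fail state. *)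

(* Defs.v *)
From HB Require Import structures.
From mathcomp Require Import all_boot all_order all_algebra.
From mathcomp Require Import all_classical all_reals all_analysis.
Set Implicit Arguments. Unset Strict Implicit. Unset Printing Implicit Defensive.
Import Order.TTheory GRing.Theory Num.Theory.
Import numFieldNormedType.Exports.
Local Open Scope classical_set_scope.
Local Open Scope ring_scope.

Record ctmc (R : realType) (S : finType) (Lab : eqType) := CTMC {
  P : S -> S -> R;
  E : S -> R;
  s_init : S;
  L : S -> Lab;
  P_ge0 : forall s s', 0 <= P s s';
  P_sum1 : forall s, \sum_(s' : S) P s s' = 1;
  E_gt0 : forall s, 0 < E s }.

Section CTMCdefs.
Variables (R : realType) (S : finType) (Lab : eqType) (M : ctmc R S Lab).

Definition Pset (s : S) (A : {set S}) : R := \sum_(a in A) P M s a.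

Definition rel_image (Rel : rel S) (A : {set S}) : {set S} :=
  [set t' | [exists a in A, Rel a t']].

Definition is_bisim (eps delta : R) (Rel : rel S) : Prop :=
  reflexive Rel /\ symmetric Rel /\
  forall s s', Rel s s' ->
    [/\ L M s = L M s',
        `| ln (E M s) - ln (E M s') | <= delta
      & forall A : {set S}, Pset s A <= Pset s' (rel_image Rel A) + eps].

Definition bisimilar (eps delta : R) (s s' : S) : Prop :=
  exists Rel : rel S, is_bisim eps delta Rel /\ Rel s s'.

Definition edge : rel S := fun a b => 0 < P M a b.

Definition qmax : R := \big[Num.max/0]_(p : S) E M p.

(* Probability of reaching g from s within time t using at most n jumps:
   the standard Volterra-type recursion over the first residence time
   (density E(s) e^{-E(s) x}) followed by a jump according to P. *)
Fixpoint reach_n (g : S) (n : nat) (s : S) (t : R) : R :=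
  match n with
  | O => if s == g then 1 else 0
  | n'.+1 =>
      if s == g then 1 else
      \int[@lebesgue_measure R]_(x in `[0, t])
        (E M s * expR (- (E M s * x)) *
           \sum_(s' : S) P M s s' * reach_n g n' s' (t - x))
  end.

(* Pr_s(<>^{<= t} g): the supremum (= limit, the sequence is nondecreasing)
   over the number of jumps. *)
Definition Pr_reach (g s : S) (t : R) : R :=
  sup [set reach_n g n s t | n in [set: nat]].

(* Standing assumption: g is the unique goal state, absorbing and uniquely
   labelled, and all states from which g is unreachable are collapsed into
   one absorbing uniquely labelled fail state. *)
Definition standing_assumption (g : S) : Prop :=
  [/\ P M g g = 1,
      (forall s, L M s = L M g -> s = g),
      (forall f1 f2, ~~ connect edge f1 g -> ~~ connect edge f2 g -> f1 = f2)
    & (forall f, ~~ connect edge f g ->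
         P M f f = 1 /\ forall s, L M s = L M f -> s = f)].

End CTMCdefs.

(* Main.v *)
Require Import Defs.
From HB Require Import structures.
From mathcomp Require Import all_boot all_order all_algebra.
From mathcomp Require Import all_classical all_reals all_analysis.
From mathcomp Require Import ring lra.
Import Order.TTheory GRing.Theory Num.Theory.
Local Open Scope ring_scope.

Module Aux.
Section SumLemma.
Context {R : realType} {S : finType}.
Variables (mu nu : S -> R) (Rel : rel S) (eps : R).
Hypotheses (mu0 : forall u, 0 <= mu u) (nu0 : forall u, 0 <= nu u) (eps0 : 0 <= eps).
Hypothesis setc : forall A : {set S},
  \sum_(u in A) mu u <= \sum_(u in rel_image Rel A) nu u + eps.

Lemma core_sum (N : nat) : forall (a b : S -> R) (c : R),
  (#|[set u | (0 < a u)%R]| <= N)%N -> 0 <= c ->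
  (forall u, 0 <= a u <= c) -> (forall u, 0 <= b u) ->
  (forall u u', Rel u u' -> a u <= b u') ->
  \sum_u mu u * a u <= \sum_u nu u * b u + eps * c.
Proof.
elim: N => [|N IH] a b c hN c0 ha hb hab.
  have a0 : forall u, a u = 0.
    move=> u; have := ha u => /andP[au _].
    apply/eqP; rewrite eq_le au andbT leNgt; apply/negP => au0.
    move: hN; rewrite leqn0 cards_eq0 => /eqP/setP/(_ u).
    by rewrite inE au0 inE.
  rewrite big1 ?add0r; last by move=> u _; rewrite a0 mulr0.
  apply: addr_ge0; last exact: mulr_ge0.
  by apply: sumr_ge0 => u _; apply: mulr_ge0.
set A := [set u | 0 < a u].
have [A0|[u1 u1A]] := set_0Vmem A.
  by apply: IH => //; rewrite -/A A0 cards0.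
case: (arg_minP a u1A) => u0 u0A' u0min.
have u0A : u0 \in A by exact: u0A'.
set m := a u0.
have m0 : 0 < m by move: u0A; rewrite /A inE.
have mc : m <= c by have := ha u0 => /andP[].
have amA : forall u, u \in A -> m <= a u by move=> u uA; exact: (u0min u uA).
pose a' u := Num.max 0 (a u - m).
pose b' u := Num.max 0 (b u - m).
have IH' := IH a' b' (c - m).
have hN' : (#|[set u | (0 < a' u)%R]| <= N)%N.
  have sub : [set u | 0 < a' u] \subset A :\ u0.
    apply/fintype.subsetP => u; rewrite !inE /a' lt_max ltxx /= subr_gt0 => mau.
    apply/andP; split.
      by apply/eqP => e; move: mau; rewrite e /m ltxx.
    exact: lt_trans m0 mau.
  apply: leq_trans (subset_leq_card sub) _.
  by move: hN; rewrite (cardsD1 u0 A) u0A.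
have IHa : \sum_u mu u * a' u <= \sum_u nu u * b' u + eps * (c - m).
  apply: IH' => //.
  - by rewrite subr_ge0.
  - move=> u; rewrite /a' le_max lexx /= ge_max subr_ge0 mc /= lerD2r.
    by have /andP[] := ha u.
  - by move=> u; rewrite /b' le_max lexx.
  - move=> u u' r; rewrite /a' /b' ge_max le_max lexx /= le_max lerD2r hab //.
    by rewrite orbT.
have ea : \sum_u mu u * a u = \sum_(u in A) mu u * m + \sum_u mu u * a' u.
  rewrite [X in _ = X + _]big_mkcond /= -big_split /=; apply: eq_bigr => u _.
  case: ifP => uA.
    have h0 : 0 <= a u - m by rewrite subr_ge0 amA.
    by rewrite /a' maxEle h0; ring.
  have au0 : a u = 0.
    have /andP[au _] := ha u; apply/eqP; rewrite eq_le au andbT leNgt.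
    by apply/negP => au0; move: uA; rewrite /A inE au0.
  rewrite /a' au0 maxEle sub0r oppr_ge0 leNgt m0 /=; ring.
have eb : \sum_u nu u * b u = \sum_u nu u * Num.min (b u) m + \sum_u nu u * b' u.
  rewrite -big_split /=; apply: eq_bigr => u _.
  rewrite /b' minEle maxEle subr_ge0.
  case: (leP (b u) m) => bm.
    case: (leP m (b u)) => mb; last by ring.
    have -> : b u = m by apply/eqP; rewrite eq_le bm mb.
    ring.
  rewrite ltW //; ring.
have hm : \sum_(u in A) mu u * m <= m * (\sum_(u in rel_image Rel A) nu u + eps).
  rewrite -mulr_suml [leLHS]mulrC; apply: ler_wpM2l; [exact: ltW | exact: setc].
have hRA : m * \sum_(u in rel_image Rel A) nu u <= \sum_u nu u * Num.min (b u) m.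
  rewrite mulr_sumr.
  apply: (@le_trans _ _ (\sum_(u in rel_image Rel A) nu u * Num.min (b u) m)).
    apply: ler_sum => u; rewrite inE => /existsP[v /andP[vA rvu]].
    have mbu : m <= b u by apply: le_trans (amA v vA) (hab _ _ rvu).
    rewrite minEle; case: (leP (b u) m) => h; last by rewrite mulrC.
    have -> : b u = m by apply/eqP; rewrite eq_le h mbu.
    by rewrite mulrC.
  rewrite [leRHS](bigID (fun u => u \in rel_image Rel A)) /= lerDl.
  apply: sumr_ge0 => u _; apply: mulr_ge0 => //.
  by rewrite le_min hb (ltW m0).
rewrite ea eb.
have e1 : m * (\sum_(u in rel_image Rel A) nu u + eps) = m * \sum_(u in rel_image Rel A) nu u + eps * m by ring.
rewrite e1 in hm.
have e2 : eps * (c - m) = eps * c - eps * m by ring.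
rewrite e2 in IHa.
lra.
Qed.

Lemma sum_lemma (f : S -> R) (d : R) :
  \sum_u mu u = 1 -> 0 <= d <= 1 -> (forall u, 0 <= f u <= 1) ->
  (forall u u', Rel u u' -> f u - f u' <= d) ->
  \sum_u mu u * f u - \sum_u nu u * f u <= d + eps * (1 - d).
Proof.
move=> mu1 /andP[d0 d1] hf hd.
pose a u := Num.max 0 (f u - d).
pose b u := Num.min (f u) (1 - d).
have hc := @core_sum #|S| a b (1 - d).
have H : \sum_u mu u * a u <= \sum_u nu u * b u + eps * (1 - d).
  apply: hc.
  - by apply: leq_trans (max_card _) _.
  - by rewrite subr_ge0.
  - move=> u; rewrite /a le_max lexx /= ge_max subr_ge0 d1 /= lerD2r.
    by have /andP[] := hf u.
  - by move=> u; rewrite /b le_min subr_ge0 d1 andbT; have /andP[] := hf u.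
  - move=> u u' r; rewrite /a /b ge_max !le_min subr_ge0 d1 /=.
    have /andP[fu0 fu1] := hf u; have /andP[fu'0 fu'1] := hf u'.
    rewrite fu'0 /= lerD2r fu1 andbT.
    by have := hd u u' r; rewrite lerBlDl lerBlDr addrC.
have ef : \sum_u mu u * f u = \sum_u mu u * Num.min (f u) d + \sum_u mu u * a u.
  rewrite -big_split /=; apply: eq_bigr => u _.
  rewrite /a minEle maxEle subr_ge0.
  case: (leP (f u) d) => fd.
    case: (leP d (f u)) => df; last by ring.
    have -> : f u = d by apply/eqP; rewrite eq_le fd df.
    ring.
  rewrite ltW //; ring.
have h1 : \sum_u mu u * Num.min (f u) d <= d.
  apply: (@le_trans _ _ (\sum_u mu u * d)).
    by apply: ler_sum => u _; apply: ler_wpM2l => //; rewrite ge_min lexx orbT.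
  by rewrite -mulr_suml mu1 mul1r.
have h2 : \sum_u nu u * b u <= \sum_u nu u * f u.
  by apply: ler_sum => u _; apply: ler_wpM2l => //; rewrite ge_min lexx.
rewrite ef; lra.
Qed.
End SumLemma.

Import numFieldNormedType.Exports.
Local Open Scope classical_set_scope.
Local Open Scope ring_scope.

Section S.
Context {R : realType}.
Notation mu := (@lebesgue_measure R).

Lemma is_derive_expaff (c k x : R) :
  is_derive x 1 (fun y => expR (c * y + k)) (expR (c * x + k) * c).
Proof.
have -> : (fun y => expR (c * y + k)) = expR \o (fun y => c * y + k) by [].
apply: is_derive1_comp.
apply: is_derive_eq.
by rewrite addr0 /GRing.scale /= mulr1.
Qed.

Lemma derivable_expaff (c k x : R) : derivable (fun y => expR (c * y + k)) x 1.
Proof. by case: (is_derive_expaff c k x). Qed.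

Lemma continuous_expaff (c k : R) : continuous (fun y => expR (c * y + k)).
Proof. by move=> x; exact/differentiable_continuous/derivable1_diffP/derivable_expaff. Qed.

Lemma derive1_expaff (c k x : R) :
  (fun y => expR (c * y + k))^`()%classic x = expR (c * x + k) * c.
Proof. by rewrite derive1E; case: (is_derive_expaff c k x). Qed.

Lemma Rint_expaff (c k t : R) : 0 <= t ->
  \int[mu]_(x in `[0, t]) (expR (c * x + k) * c) = expR (c * t + k) - expR k.
Proof.
rewrite le_eqVlt => /predU1P[<-|t0].
  by rewrite set_itv1 Rintegral_set1 mulr0 add0r subrr.
rewrite /Rintegral (@continuous_FTC2 _ _ (fun y => expR (c * y + k))) //=.
- by rewrite mulr0 add0r.
- apply: continuous_subspaceT => x.
  apply: (@continuousM R R (fun y => expR (c * y + k)) (fun=> c) x); [exact: continuous_expaff | exact: cst_continuous].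
- split.
  + by move=> x _; exact: derivable_expaff.
  + by apply/cvg_at_right_filter; exact: continuous_expaff.
  + by apply/cvg_at_left_filter; exact: continuous_expaff.
- by move=> x _; rewrite derive1_expaff.
Qed.
Lemma int_bnd (t M : R) (f : R -> R) : measurable_fun `[0, t] f ->
  (forall x, 0 <= x <= t -> `|f x| <= M) -> mu.-integrable `[0, t] (EFin \o f).
Proof.
move=> mf fM; apply: measurable_bounded_integrable => //.
  have := @lebesgue_measure_itv R `[0, t]; rewrite /= => ->.
  by case: ifP => _; rewrite ?ltry.
exists M; split; first by rewrite num_real.
move=> M0 MM0 x /=; rewrite in_itv /= => Hx.
by rewrite (le_trans (fM x Hx)) // ltW.
Qed.

Lemma meas_ni (t : R) (f : R -> R) :
  (forall x y, x <= y -> f y <= f x) -> measurable_fun `[0, t] f.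
Proof. by move=> fni; apply: measurable_realfun.nonincreasing_measurable => // x y; exact: fni. Qed.

Lemma meas_nd (t : R) (f : R -> R) :
  (forall x y, x <= y -> f x <= f y) -> measurable_fun `[0, t] f.
Proof. by move=> fni; apply: measurable_realfun.nondecreasing_measurable => // x y; exact: fni. Qed.

Lemma meas_expaff (t c k : R) : measurable_fun `[0, t] (fun x => expR (c * x + k)).
Proof.
have [c0|c0] := leP 0 c.
  by apply: meas_nd => x y xy; rewrite ler_expR lerD2r ler_wpM2l.
by apply: meas_ni => x y xy; rewrite ler_expR lerD2r ler_wnM2l // ltW.
Qed.

Lemma int_expaff (t c k : R) : 0 <= t ->
  mu.-integrable `[0, t] (EFin \o (fun x => expR (c * x + k))).
Proof.
move=> t0; apply: (@int_bnd _ (expR (`|c| * t + k))); first exact: meas_expaff.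
move=> x /andP[x0 xt].
rewrite ger0_norm ?expR_ge0 // ler_expR lerD2r.
apply: (le_trans (ler_norm _)); rewrite normrM (ger0_norm x0).
by apply: ler_wpM2l.
Qed.

Lemma intB (t : R) (f g : R -> R) :
  mu.-integrable `[0, t] (EFin \o f) -> mu.-integrable `[0, t] (EFin \o g) ->
  mu.-integrable `[0, t] (EFin \o (fun x => f x - g x)).
Proof.
move=> fi gi; apply: eq_integrable (integrableB _ fi gi) => //.
Qed.

Lemma intZ (t k : R) (f : R -> R) :
  mu.-integrable `[0, t] (EFin \o f) ->
  mu.-integrable `[0, t] (EFin \o (fun x => k * f x)).
Proof.
move=> fi; apply: eq_integrable (integrableZl _ k fi) => //.
Qed.


Lemma EXP2 (c k t : R) : 0 <= t ->
  c * \int[mu]_(x in `[0, t]) expR (c * x + k) = expR (c * t + k) - expR k.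
Proof.
move=> t0; rewrite mulrC -RintegralZr //; last exact: int_expaff.
exact: Rint_expaff.
Qed.

Lemma Rint_exp1 (l t : R) : 0 <= t ->
  \int[mu]_(x in `[0, t]) (l * expR (- (l * x))) = 1 - expR (- (l * t)).
Proof.
move=> t0.
rewrite (_ : (fun x => l * expR (- (l * x))) = (fun x => l * expR ((- l) * x + 0))); last first.
  by apply/funext => x; rewrite addr0 mulNr.
rewrite RintegralZl //; last exact: int_expaff.
have h : (- l) * \int[mu]_(x in `[0, t]) expR (- l * x + 0) = expR (- (l * t)) - 1.
  by rewrite EXP2 // addr0 expR0 mulNr.
rewrite mulNr in h; lra.
Qed.

Lemma Rint_neg (f : R -> R) (t : R) : t < 0 -> \int[mu]_(x in `[0, t]) f x = 0.
Proof. by move=> t0; rewrite set_itv_ge ?Rintegral_set0 // bnd_simp -ltNge. Qed.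

Lemma sub_Rint (t1 t2 : R) (f : R -> R) : 0 <= t1 -> t1 <= t2 ->
  (forall x, 0 <= x <= t2 -> 0 <= f x) ->
  mu.-integrable `[0, t2] (EFin \o f) ->
  \int[mu]_(x in `[0, t1]) f x <= \int[mu]_(x in `[0, t2]) f x.
Proof.
move=> t10 t12 f0 fi.
have sub : `[0, t1] `<=` `[0, t2] by apply: subset_itvl; rewrite bnd_simp.
rewrite /Rintegral; apply: fine_le.
- by apply: integrable_fin_num => //; apply: integrableS fi.
- exact: integrable_fin_num.
- apply: ge0_subset_integral => //.
  + exact: measurable_int fi.
Qed.
End S.

Section CTMC.
Context {R : realType} {S : finType} {Lab : eqType} (M : ctmc R S Lab) (g : S).
Notation mu := (@lebesgue_measure R).

Definition Gs (s : S) (F : S -> R -> R) (y : R) : R := \sum_(u : S) P M s u * F u y.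
Definition kern s F (t x : R) := E M s * expR (- (E M s * x)) * Gs s F (t - x).
Definition Ik s F t := \int[mu]_(x in `[0, t]) kern s F t x.

Lemma reachS n s t :
  reach_n M g n.+1 s t = if s == g then 1 else Ik s (reach_n M g n) t.
Proof. by []. Qed.

Definition good (F : S -> R -> R) := forall u,
  (forall y, 0 <= F u y <= 1) /\ (forall y1 y2, y1 <= y2 -> F u y1 <= F u y2).

Lemma Gs_bnd F s y : good F -> 0 <= Gs s F y <= 1.
Proof.
move=> gF; apply/andP; split.
  apply: sumr_ge0 => u _; apply: mulr_ge0; first exact: P_ge0.
  by have [/(_ y)/andP[]] := gF u.
rewrite -(P_sum1 M s); apply: ler_sum => u _.
rewrite -[leRHS]mulr1; apply: ler_wpM2l; first exact: P_ge0.
by have [/(_ y)/andP[]] := gF u.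
Qed.

Lemma Gs_nd F s y1 y2 : good F -> y1 <= y2 -> Gs s F y1 <= Gs s F y2.
Proof.
move=> gF y12; apply: ler_sum => u _; apply: ler_wpM2l; first exact: P_ge0.
by have [_ ->] := gF u.
Qed.

Lemma E_ge0 s : 0 <= E M s. Proof. exact/ltW/E_gt0. Qed.

Lemma kern_ge0 F s t x : good F -> 0 <= kern s F t x.
Proof.
move=> gF; rewrite /kern; apply: mulr_ge0; first exact: mulr_ge0 (E_ge0 s) (expR_ge0 _).
by have /andP[] := Gs_bnd F s (t - x) gF.
Qed.

Lemma kern_ni F s t : good F -> forall x y, x <= y -> kern s F t y <= kern s F t x.
Proof.
move=> gF x y xy; rewrite /kern; apply: ler_pM.
- exact: mulr_ge0 (E_ge0 s) (expR_ge0 _).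
- by have /andP[] := Gs_bnd F s (t - y) gF.
- apply: ler_wpM2l; first exact: E_ge0.
  by rewrite ler_expR lerN2; apply: ler_wpM2l => //; exact: E_ge0.
- by apply: Gs_nd => //; rewrite lerD2l lerN2.
Qed.

Lemma kern_int F s t : good F -> mu.-integrable `[0, t] (EFin \o kern s F t).
Proof.
move=> gF; apply: (@int_bnd _ _ (E M s)); first exact: meas_ni (kern_ni F s t gF).
move=> x /andP[x0 xt]; rewrite ger0_norm; last exact: kern_ge0.
rewrite /kern -[leRHS]mulr1 -mulrA; apply: ler_wpM2l; first exact: E_ge0.
rewrite -[1]mulr1; apply: ler_pM => //.
- by have /andP[] := Gs_bnd F s (t - x) gF.
- by rewrite -expR0 ler_expR oppr_le0; apply: mulr_ge0 => //; exact: E_ge0.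
- by have /andP[] := Gs_bnd F s (t - x) gF.
Qed.

Lemma int_exp1 (l t : R) : 0 <= t ->
  mu.-integrable `[0, t] (EFin \o (fun x => l * expR (- (l * x)))).
Proof.
move=> t0.
rewrite (_ : (fun x => l * expR (- (l * x))) = (fun x => l * expR ((- l) * x + 0))); last first.
  by apply/funext => x; rewrite addr0 mulNr.
by apply: intZ; apply: int_expaff.
Qed.

Lemma Ik_bnd F s t : good F -> 0 <= t -> 0 <= Ik s F t <= 1 - expR (- (E M s * t)).
Proof.
move=> gF t0; apply/andP; split.
  by apply: Rintegral_ge0 => x _; exact: kern_ge0.
rewrite -Rint_exp1 //; apply: le_Rintegral => //.
- exact: kern_int.
- exact: int_exp1.
- move=> x _; rewrite /kern -[leRHS]mulr1; apply: ler_wpM2l.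
    exact: mulr_ge0 (E_ge0 s) (expR_ge0 _).
  by have /andP[] := Gs_bnd F s (t - x) gF.
Qed.

Lemma Ik_01 F s t : good F -> 0 <= Ik s F t <= 1.
Proof.
move=> gF; have [t0|t0] := ltP t 0.
  by rewrite /Ik Rint_neg // lexx ler01.
have /andP[-> h] := Ik_bnd F s t gF t0; rewrite (le_trans h) //.
Qed.

Lemma Ik_nd F s t1 t2 : good F -> t1 <= t2 -> Ik s F t1 <= Ik s F t2.
Proof.
move=> gF t12; have [t10|t10] := ltP t1 0.
  by rewrite {1}/Ik Rint_neg //; have /andP[] := Ik_01 F s t2 gF.
apply: (@le_trans _ _ (\int[mu]_(x in `[0, t1]) kern s F t2 x)).
  apply: le_Rintegral => //; try exact: kern_int.
    by apply: integrableS (kern_int F s t2 gF) => //; apply: subset_itvl; rewrite bnd_simp.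
  move=> x _; rewrite /kern; apply: ler_wpM2l.
    exact: mulr_ge0 (E_ge0 s) (expR_ge0 _).
  by apply: Gs_nd => //; rewrite lerD2r.
apply: sub_Rint => //.
  by move=> x _; exact: kern_ge0.
exact: kern_int.
Qed.

Lemma good_reach n : good (reach_n M g n).
Proof.
elim: n => [|n IH] u; split.
- by move=> y /=; case: (u == g); rewrite lexx ler01.
- by move=> y1 y2 _ /=.
- by move=> y; rewrite reachS; case: (u == g); [rewrite ler01 lexx | exact: Ik_01].
- by move=> y1 y2 y12; rewrite !reachS; case: (u == g) => //; exact: Ik_nd.
Qed.

End CTMC.

Section Steps.
Context {R : realType} {S : finType} {Lab : eqType} (M : ctmc R S Lab) (g : S).
Notation mu := (@lebesgue_measure R).

Lemma Gs_diff (Rel : rel S) (eps d : R) F s s' y :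
  0 <= eps -> good F -> 0 <= d <= 1 ->
  (forall A, Pset M s A <= Pset M s' (rel_image Rel A) + eps) ->
  (forall u u', Rel u u' -> F u y - F u' y <= d) ->
  Gs M s F y - Gs M s' F y <= d + eps * (1 - d).
Proof.
move=> eps0 gF hd setc hF.
apply: (@sum_lemma _ _ (P M s) (P M s') Rel eps) => //.
- by move=> u; exact: P_ge0.
- by move=> u; exact: P_ge0.
- exact: P_sum1.
- by move=> u; have [/(_ y)] := gF u.
Qed.

Lemma step1 (Rel : rel S) (eps q : R) F s s' t :
  0 <= eps <= 1 -> E M s <= q -> E M s = E M s' ->
  (forall A, Pset M s A <= Pset M s' (rel_image Rel A) + eps) ->
  good F ->
  (forall u u' y, Rel u u' -> 0 <= y -> F u y - F u' y <= 1 - expR (- (q * eps * y))) ->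
  0 <= t ->
  Ik M s F t - Ik M s' F t <= 1 - expR (- (q * eps * t)).
Proof.
move=> /andP[e0 e1] lq Ess setc gF hF t0.
set l := E M s. set a := q * eps.
have l0 : 0 <= l by exact: E_ge0.
have q0 : 0 <= q by exact: le_trans lq.
have a0 : 0 <= a by exact: mulr_ge0.
pose T x := l * expR (- (l * x)) - ((1 - eps) * l) * expR ((a - l) * x + - (a * t)).
have iT : mu.-integrable `[0, t] (EFin \o T).
  by apply: intB; [exact: int_exp1 | apply: intZ; exact: int_expaff].
rewrite /Ik -RintegralB //; try exact: kern_int.
apply: (@le_trans _ _ (\int[mu]_(x in `[0, t]) T x)).
  apply: le_Rintegral => //; first by apply: intB; exact: kern_int.
  move=> x; rewrite /= in_itv /= => /andP[x0 xt].
  have d01 : 0 <= 1 - expR (- (a * (t - x))) <= 1.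
    rewrite subr_ge0 lerBlDr lerDl expR_ge0 andbT -expR0 ler_expR oppr_le0.
    by apply: mulr_ge0 => //; rewrite subr_ge0.
  have hG := @Gs_diff Rel eps _ F s s' (t - x) e0 gF d01 setc (fun u u' r => hF u u' (t - x) r ltac:(by rewrite subr_ge0)).
  rewrite /kern -Ess -/l /T.
  have eexp : expR ((a - l) * x + - (a * t)) = expR (- (l * x)) * expR (- (a * (t - x))).
    by rewrite -expRD; congr expR; ring.
  rewrite eexp.
  have le0 : 0 <= l * expR (- (l * x)) by apply: mulr_ge0 => //; exact: expR_ge0.
  rewrite -mulrBr; apply: (le_trans (ler_wpM2l le0 hG)).
  by rewrite le_eqVlt; apply/orP; left; apply/eqP; ring.
have E2ge0 : 0 <= \int[mu]_(x in `[0, t]) expR ((a - l) * x + - (a * t)).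
  by apply: Rintegral_ge0 => x _; exact: expR_ge0.
have hE2 : (a - l) * \int[mu]_(x in `[0, t]) expR ((a - l) * x + - (a * t)) =
    expR (- (l * t)) - expR (- (a * t)).
  by rewrite EXP2 //; congr (expR _ - _); ring.
rewrite /T RintegralB //; last 2 first.
  exact: int_exp1.
  by apply: intZ; exact: int_expaff.
rewrite Rint_exp1 // RintegralZl //; last exact: int_expaff.
have ael : eps * l <= a by rewrite /a mulrC; apply: ler_wpM2r.
have p := mulr_ge0 (ltac:(by rewrite subr_ge0) : 0 <= a - eps * l) E2ge0.
clearbody l a.
move: (\int[mu]_(x in `[0, t]) expR ((a - l) * x - a * t)) E2ge0 hE2 p => I E2ge0 hE2 p.
lra.
Qed.


Lemma rate_bound (l m q delta : R) : 0 < l -> 0 < m -> m <= q ->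
  `|ln l - ln m| <= delta -> l - m <= q * (expR delta - 1).
Proof.
move=> l0 m0 mq hd.
have ed : 0 <= expR delta - 1.
  have d0 : 0 <= delta by exact: le_trans (normr_ge0 _) hd.
  by rewrite subr_ge0 (le_trans _ (expR_ge1Dx delta)) // lerDl.
have : ln l <= ln m + delta.
  by move: hd; rewrite ler_norml => /andP[_]; rewrite lerBlDl addrC.
rewrite -ler_expR expRD !lnK ?posrE // => h.
have : m * (expR delta - 1) <= q * (expR delta - 1) by apply: ler_wpM2r.
lra.
Qed.

Lemma step2 (Rel : rel S) (delta q : R) F s s' t :
  E M s <= q -> E M s' <= q -> `|ln (E M s) - ln (E M s')| <= delta ->
  (forall A, Pset M s A <= Pset M s' (rel_image Rel A) + 0) ->
  good F ->
  (forall u u' y, Rel u u' -> 0 <= y ->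
     F u y - F u' y <= 1 - expR (- (q * (expR delta - 1) * y))) ->
  0 <= t ->
  Ik M s F t - Ik M s' F t <= 1 - expR (- (q * (expR delta - 1) * t)).
Proof.
move=> lq mq hd setc gF hF t0.
have hlm := @rate_bound (E M s) (E M s') q delta (E_gt0 M s) (E_gt0 M s') mq hd.
have hml : E M s' - E M s <= q * (expR delta - 1).
  by apply: (@rate_bound (E M s') (E M s) q delta (E_gt0 M s') (E_gt0 M s) lq); rewrite distrC.
have b0 : 0 <= q * (expR delta - 1).
  have := E_gt0 M s; have := E_gt0 M s'; lra.
move: hlm hml b0 hF; set b := q * (expR delta - 1) => hlm hml b0 hF.
have l0 := E_gt0 M s; have m0 := E_gt0 M s'.
have hGx : forall x, 0 <= x <= t ->
    Gs M s F (t - x) - Gs M s' F (t - x) <= 1 - expR (- (b * (t - x))).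
  move=> x /andP[x0 xt].
  have d01 : 0 <= 1 - expR (- (b * (t - x))) <= 1.
    rewrite subr_ge0 lerBlDr lerDl expR_ge0 andbT -expR0 ler_expR oppr_le0.
    by apply: mulr_ge0 => //; rewrite subr_ge0.
  have := @Gs_diff Rel 0 _ F s s' (t - x) (lexx 0) gF d01 setc
    (fun u u' r => hF u u' (t - x) r ltac:(by rewrite subr_ge0)).
  by rewrite mul0r addr0.
have GB : forall u x, 0 <= Gs M u F (t - x) <= 1 by move=> u x; exact: Gs_bnd.
rewrite /Ik -RintegralB //; try exact: kern_int.
have [ml|lm] := leP (E M s') (E M s).
- pose T x := E M s * expR (- (E M s * x)) -
              E M s' * expR ((b - E M s) * x + - (b * t)).
  have iT : mu.-integrable `[0, t] (EFin \o T).
    by apply: intB; [exact: int_exp1 | apply: intZ; exact: int_expaff].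
  apply: (@le_trans _ _ (\int[mu]_(x in `[0, t]) T x)).
    apply: le_Rintegral => //; first by apply: intB; exact: kern_int.
    move=> x; rewrite /= in_itv /= => /andP[x0 xt].
    have hG := hGx x (ltac:(by rewrite x0 xt)).
    rewrite /kern /T.
    have eexp : expR ((b - E M s) * x + - (b * t)) =
        expR (- (E M s * x)) * expR (- (b * (t - x))).
      by rewrite -expRD; congr expR; ring.
    rewrite eexp.
    have eme1 : expR (- (E M s * x)) <= expR (- (E M s' * x)).
      by rewrite ler_expR lerN2; apply: ler_wpM2r.
    have /andP[G0 G1] := GB s x; have /andP[G'0 G'1] := GB s' x.
    have e10 := expR_ge0 (- (E M s * x)).
    move: hG eme1 G0 G1 G'0 G'1 e10.
    move: (Gs M s F (t - x)) (Gs M s' F (t - x)) (expR (- (E M s * x)))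
          (expR (- (E M s' * x))) (expR (- (b * (t - x)))) => G G' e1 em ec.
    move=> hG eme1 G0 G1 G'0 G'1 e10.
    have p1 := mulr_ge0 (mulr_ge0 (ltW m0) G'0) (ltac:(by rewrite subr_ge0) : 0 <= em - e1).
    have p2 := mulr_ge0 (mulr_ge0 (ltW m0) e10) (ltac:(by rewrite subr_ge0) : 0 <= (1 - ec) - (G - G')).
    have p3 := mulr_ge0 (mulr_ge0 (ltac:(by rewrite subr_ge0) : 0 <= E M s - E M s') e10)
                        (ltac:(by rewrite subr_ge0) : 0 <= 1 - G).
    move: (E M s) (E M s') p1 p2 p3 => l m p1 p2 p3.
    lra.
  have E2ge0 : 0 <= \int[mu]_(x in `[0, t]) expR ((b - E M s) * x + - (b * t)).
    by apply: Rintegral_ge0 => x _; exact: expR_ge0.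
  have hE2 : (b - E M s) * \int[mu]_(x in `[0, t]) expR ((b - E M s) * x + - (b * t)) =
      expR (- (E M s * t)) - expR (- (b * t)).
    by rewrite EXP2 //; congr (expR _ - _); ring.
  rewrite /T RintegralB //; last 2 first.
    exact: int_exp1.
    by apply: intZ; exact: int_expaff.
  rewrite Rint_exp1 // RintegralZl //; last exact: int_expaff.
  have p := mulr_ge0 (ltac:(by rewrite subr_ge0 addrC -lerBlDr) : 0 <= E M s' + b - E M s) E2ge0.
  move: (\int[mu]_(x in `[0, t]) expR ((b - E M s) * x - b * t)) E2ge0 hE2 p => I E2ge0 hE2 p.
  move: (E M s) (E M s') hE2 p => l m hE2 p.
  lra.
- pose T x := (1 - expR (- (b * t))) * (E M s * expR (- (E M s * x))).
  have iT : mu.-integrable `[0, t] (EFin \o T) by apply: intZ; exact: int_exp1.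
  apply: (@le_trans _ _ (\int[mu]_(x in `[0, t]) T x)).
    apply: le_Rintegral => //; first by apply: intB; exact: kern_int.
    move=> x; rewrite /= in_itv /= => /andP[x0 xt].
    have hG := hGx x (ltac:(by rewrite x0 xt)).
    rewrite /kern /T.
    have eme1 : expR (- (E M s' * x)) <= expR (- (E M s * x)).
      by rewrite ler_expR lerN2; apply: ler_wpM2r => //; exact: ltW.
    have ecmp : expR (- (E M s * x)) * expR (- (b * t)) <=
                expR (- (E M s' * x)) * expR (- (b * (t - x))).
      rewrite -!expRD ler_expR.
      rewrite -subr_ge0 (_ : _ - _ = (b + E M s - E M s') * x); last by ring.
      by apply: mulr_ge0 => //; rewrite subr_ge0 -lerBlDr.
    have /andP[G0 G1] := GB s x; have /andP[G'0 G'1] := GB s' x.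
    have em0 := expR_ge0 (- (E M s' * x)).
    move: hG eme1 ecmp G0 G1 G'0 G'1 em0.
    move: (Gs M s F (t - x)) (Gs M s' F (t - x)) (expR (- (E M s * x)))
          (expR (- (E M s' * x))) (expR (- (b * (t - x)))) (expR (- (b * t)))
       => G G' e1 em ec eb.
    move=> hG eme1 ecmp G0 G1 G'0 G'1 em0.
    have p1 := mulr_ge0 (mulr_ge0 (ltac:(by rewrite subr_ge0 ltW) : 0 <= E M s' - E M s) em0) G'0.
    have p2 := mulr_ge0 (mulr_ge0 (ltW l0) em0) (ltac:(by rewrite subr_ge0) : 0 <= (1 - ec) - (G - G')).
    have p3 := mulr_ge0 (mulr_ge0 (ltW l0) (ltac:(by rewrite subr_ge0) : 0 <= e1 - em))
                        (ltac:(by rewrite subr_ge0) : 0 <= 1 - G).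
    have p4 := mulr_ge0 (ltW l0) (ltac:(by rewrite subr_ge0) : 0 <= em * ec - e1 * eb).
    move: (E M s) (E M s') p1 p2 p3 p4 => l m p1 p2 p3 p4.
    lra.
  rewrite /T RintegralZl //; last exact: int_exp1.
  rewrite Rint_exp1 //.
  have p := mulr_ge0 (ltac:(by rewrite subr_ge0 -expR0 ler_expR oppr_le0; exact: mulr_ge0) :
                         0 <= 1 - expR (- (b * t))) (expR_ge0 (- (E M s * t))).
  move: p; move: (expR (- (b * t))) (expR (- (E M s * t))) => x y p.
  lra.
Qed.

End Steps.

Section Final.
Context {R : realType} {S : finType} {Lab : eqType} (M : ctmc R S Lab) (g : S).

Lemma main_ind (Rel : rel S) (h : R -> R) :
  (forall s s', Rel s s' -> (s == g) = (s' == g)) ->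
  (forall y, 0 <= y -> 0 <= h y) ->
  (forall F s s' t, good F ->
     (forall u u' y, Rel u u' -> 0 <= y -> F u y - F u' y <= h y) ->
     Rel s s' -> s != g -> s' != g -> 0 <= t -> Ik M s F t - Ik M s' F t <= h t) ->
  forall n s s' t, Rel s s' -> 0 <= t ->
    reach_n M g n s t - reach_n M g n s' t <= h t.
Proof.
move=> hg h0 step n; elim: n => [|n IH] s s' t r t0.
  by rewrite /= -(hg _ _ r); case: (s == g); rewrite subrr; exact: h0.
rewrite !reachS -(hg _ _ r); case: ifP => sg; first by rewrite subrr h0.
apply: step => //; try exact: good_reach; try (by move=> u u' y r' y0; exact: IH);
  try (by rewrite sg); by rewrite -(hg _ _ r) sg.
Qed.

Lemma sup_diff (a b : nat -> R) (c : R) :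
  (forall n, a n - b n <= c) -> (forall n, b n <= 1) ->
  sup [set a n | n in [set: nat]] - sup [set b n | n in [set: nat]] <= c.
Proof.
move=> hab hb1.
have hB : has_ubound [set b n | n in [set: nat]].
  by exists 1 => _ [n _ <-]; exact: hb1.
rewrite lerBlDr; apply: ge_sup.
  by exists (a 0%N), 0%N.
move=> _ [n _ <-].
have := @ub_le_sup _ _ hB (b n) (ltac:(by exists n)).
have := hab n.
move: (a n) (b n) (sup [set b n | n in [set: nat]]) => x y z.
lra.
Qed.

Lemma Pr_diff (Rel : rel S) (h : R -> R) s s' t :
  symmetric Rel ->
  (forall s s', Rel s s' -> (s == g) = (s' == g)) ->
  (forall y, 0 <= y -> 0 <= h y) ->
  (forall F s s' t, good F ->
     (forall u u' y, Rel u u' -> 0 <= y -> F u y - F u' y <= h y) ->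
     Rel s s' -> s != g -> s' != g -> 0 <= t -> Ik M s F t - Ik M s' F t <= h t) ->
  Rel s s' -> 0 <= t ->
  `|Pr_reach M g s t - Pr_reach M g s' t| <= h t.
Proof.
move=> sym hg h0 step r t0.
have b1 : forall u n, reach_n M g n u t <= 1.
  by move=> u n; have [/(_ t)/andP[]] := good_reach M g n u.
rewrite ler_norml; apply/andP; split.
  rewrite lerNl opprB; apply: sup_diff => // n.
  by apply: (@main_ind Rel h) => //; rewrite sym.
by apply: sup_diff => // n; exact: (@main_ind Rel h).
Qed.

Lemma le_qmax u : E M u <= qmax M.
Proof.
rewrite /qmax; have : u \in index_enum S by rewrite mem_index_enum.
elim: (index_enum S) => [//|p r IH]; rewrite in_cons big_cons.
case/orP => [/eqP ->|ur]; first by rewrite le_max lexx.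
by rewrite le_max IH // orbT.
Qed.

Lemma Pset_01 s A : 0 <= Pset M s A <= 1.
Proof.
apply/andP; split; first by apply: sumr_ge0 => u _; exact: P_ge0.
rewrite -(P_sum1 M s) /Pset [leRHS](bigID (fun u => u \in A)) /= lerDl.
by apply: sumr_ge0 => u _; exact: P_ge0.
Qed.

End Final.

End Aux.
Import Aux.

Theorem corollary2 (R : realType) (S : finType) (Lab : eqType)
  (M : ctmc R S Lab) (g : S) (eps delta t : R) (s s' : S) :
  standing_assumption M g ->
  0 <= eps -> 0 <= delta -> 0 <= t ->
  bisimilar M eps delta s s' ->
  [/\ (delta = 0 ->
         `| Pr_reach M g s t - Pr_reach M g s' t |
           <= 1 - expR (- (qmax M * t * eps))),
      (eps = 0 ->
         `| Pr_reach M g s t - Pr_reach M g s' t |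
           <= 1 - expR (- (qmax M * t * (expR delta - 1))))
    & (eps = 0 -> delta = 0 -> Pr_reach M g s t = Pr_reach M g s' t)].
Proof.
move=> [_ Lg _ _] e0 d0 t0 [Rel [[_ [sym hR]] rss']].
have hg : forall u u', Rel u u' -> (u == g) = (u' == g).
  move=> u u' r; have [Ls _ _] := hR u u' r.
  apply/idP/idP => /eqP e; apply/eqP.
    by apply: Lg; rewrite -Ls e.
  by apply: Lg; rewrite Ls e.
set q := qmax M.
have hq : forall u, E M u <= q by move=> u; exact: le_qmax.
have q0 : 0 <= q by exact: le_trans (E_ge0 M s) (hq s).
have h0 : forall c y, 0 <= c -> 0 <= y -> 0 <= 1 - expR (- (c * y)).
  move=> c y c0 y0; rewrite subr_ge0 -expR0 ler_expR oppr_le0.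
  exact: mulr_ge0.
have part1 : delta = 0 ->
    `| Pr_reach M g s t - Pr_reach M g s' t | <= 1 - expR (- (q * t * eps)).
  move=> d00; subst delta.
  set e' := Num.min eps 1.
  have e'0 : 0 <= e' by rewrite le_min e0 ler01.
  have e'1 : e' <= 1 by rewrite ge_min lexx orbT.
  have e'e : e' <= eps by rewrite ge_min lexx.
  apply: (@le_trans _ _ (1 - expR (- (q * e' * t)))).
    apply: (@Pr_diff _ _ _ M g Rel (fun y => 1 - expR (- (q * e' * y)))) => //.
      by move=> y y0; apply: h0 => //; exact: mulr_ge0.
    move=> F u u' t' gF hF r nug nu'g t'0.
    have [_ hln hP] := hR u u' r.
    apply: (@step1 _ _ _ M Rel e' q F u u' t') => //.
    - by rewrite e'0 e'1.
    - apply: ln_inj; rewrite ?posrE ?E_gt0 //.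
      by apply/eqP; rewrite -subr_eq0 -normr_le0.
    - move=> A; rewrite /e' minEle; case: ifP => _; first exact: hP.
      have /andP[_ h1] := Pset_01 M u A; have /andP[h2 _] := Pset_01 M u' (rel_image Rel A).
      lra.
  rewrite lerD2l lerN2 ler_expR lerN2 mulrAC.
  by apply: ler_wpM2l => //; exact: mulr_ge0.
split => //.
- move=> e00; subst eps.
  rewrite (mulrAC q t).
  apply: (@Pr_diff _ _ _ M g Rel (fun y => 1 - expR (- (q * (expR delta - 1) * y)))) => //.
    move=> y y0; apply: h0 => //; apply: mulr_ge0 => //.
    by rewrite subr_ge0 (le_trans _ (expR_ge1Dx delta)) // lerDl.
  move=> F u u' t' gF hF r nug nu'g t'0.
  have [_ hln hP] := hR u u' r.
  exact: (@step2 _ _ _ M Rel delta q F u u' t').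
- move=> e00 d00; have := part1 d00; rewrite e00 mulr0 oppr0 expR0 subrr.
  by rewrite normr_le0 subr_eq0 => /eqP.
Qed.
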